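(* Let $(P,\theta)$ be an X-program with $P$ an $n\times l$ binary matrix, let $\mathbf{X}$ be its output random variable, and let $m$ be a projector on $\mathbb{F}_2^l$ with range $R$, such that the range of the dual map $m^*$ is $R^*$. Then for every $\mathbf{x}\in R$, \[ \mathbb{P}[m(\mathbf{X})=\mathbf{x}]=\mathbb{E}_{\mathbf{s}\in R^*}\big[(-1)^{\mathbf{x}\cdot\mathbf{s}}\cdot\alpha_{(P_{\mathbf{s}},2\theta)}\big], \] where $\mathbb{E}_{\mathbf{s}\in R^*}$ denotes the average over $\mathbf{s}$ uniform in $R^*$.
   Context: An X-program $(P,\theta)$: $P$ is an $n\times l$ matrix over $\mathbb{F}_2$, $\theta\in\mathbb{R}$, $\mathbf{H}_P=\sum_{a=1}^n\prod_{b=1}^lX_b^{P_{ab}}$ on $l$ qubits ($X_b$ Pauli $X$ on qubit $b$), and $\mathbf{X}$ is the random variable on $\mathbb{F}_2^l$ with $\mathbb{P}[\mathbf{X}=\mathbf{x}]=|\langle\mathbf{x}|\exp(i\theta\mathbf{H}_P)|\mathbf{0}\rangle|^2$. A projector is a linear map $m:\mathbb{F}_2^l\to\mathbb{F}_2^l$ with $m^2=m$ (not necessarily orthogonal); $K$ and $R$ are its kernel and range, and $m^*$ is its dual (transpose) with respect to the standard inner product $\mathbf{x}\cdot\mathbf{y}$. The marginal distribution is $\mathbb{P}[m(\mathbf{X})=\mathbf{x}]=[\mathbf{x}\in R]\sum_{\mathbf{k}\in K}\mathbb{P}[\mathbf{X}=\mathbf{x}+\mathbf{k}]$. For $\mathbf{s}\in\mathbb{F}_2^l$,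 $P_{\mathbf{s}}$ is the matrix obtained from $P$ by deleting all rows $\mathbf{a}$ with $\mathbf{a}\cdot\mathbf{s}=0$. For a binary matrix $M$ with $n'$ rows and rank $r$, $\mathcal{C}(M)\subseteq\mathbb{F}_2^{n'}$ is the span of its columns, $W_{\mathcal{C}}(\zeta)=\sum_{\mathbf{c}\in\mathcal{C}}\zeta^{|\mathbf{c}|}$ with $|\mathbf{c}|$ the Hamming weight, and $\alpha_{(M,\phi)}=2^{-r}e^{i\phi n'}W_{\mathcal{C}(M)}(e^{-2i\phi})$. *)

(* Defs.v *)
From HB Require Import structures.
From mathcomp Require Import all_boot all_order all_algebra.
From mathcomp Require Import all_classical all_reals all_analysis.
From mathcomp Require Import complex.
Set Implicit Arguments.
Unset Strict Implicit.
Unset Printing Implicit Defensive.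
Import Order.TTheory GRing.Theory Num.Theory.
Import numFieldNormedType.Exports.
Local Open Scope ring_scope.
Local Open Scope complex_scope.

Notation bvec l := 'rV['F_2]_l.

Definition dotF (l : nat) (x y : bvec l) : 'F_2 := (x *m y^T) 0 0.

(* matrix element <x| H_P |y> of H_P = sum_a prod_b X_b^{P_ab}:
   the Pauli string prod_b X_b^{P_ab} maps |y> to |y + row a P>. *)
Definition Hmat (R : realType) (n l : nat) (P : 'M['F_2]_(n, l))
    (x y : bvec l) : R[i] :=
  \sum_(a < n) (x == y + row a P)%:R.

Fixpoint Hpow (R : realType) (n l : nat) (P : 'M['F_2]_(n, l)) (k : nat)
    (x y : bvec l) : R[i] :=
  match k with
  | 0 => (x == y)%:R
  | k'.+1 => \sum_(z : bvec l) Hmat R P x z * Hpow R P k' z y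
  end.

(* <x| exp(i theta H_P) |0> = sum_k (i theta)^k / k! <x|H_P^k|0>
   (entry of the exponential series of the operator i theta H_P) *)
Definition amp (R : realType) (n l : nat) (P : 'M['F_2]_(n, l)) (theta : R)
    (x : bvec l) : R[i] :=
  limn (series ((fun k => ('i * theta%:C) ^+ k / (k`!)%:R * Hpow R P k x 0)
                 : nat -> (R[i] : numFieldType))).

Definition probX (R : realType) (n l : nat) (P : 'M['F_2]_(n, l)) (theta : R)
    (x : bvec l) : R[i] :=
  `|amp P theta x| ^+ 2.

(* A projector m on F_2^l is represented by a matrix M acting on row vectors:
   m(x) = x *m M, with M *m M = M.  Its dual (w.r.t. x.y = x *m y^T) is
   m^*(y) = y *m M^T. *)
Definition proj_range (l : nat) (M : 'M['F_2]_l) : {set bvec l} :=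
  [set x *m M | x : bvec l].
Definition proj_dual_range (l : nat) (M : 'M['F_2]_l) : {set bvec l} :=
  [set y *m M^T | y : bvec l].

Definition marginal (R : realType) (n l : nat) (P : 'M['F_2]_(n, l))
    (theta : R) (M : 'M['F_2]_l) (x : bvec l) : R[i] :=
  \sum_(y : bvec l | y *m M == x) probX P theta y.

(* P_s : rows a of P with a . s = 1, in their original order *)
Definition rows_s (n l : nat) (P : 'M['F_2]_(n, l)) (s : bvec l) : {set 'I_n} :=
  [set a : 'I_n | dotF (row a P) s == 1].
Definition Psub (n l : nat) (P : 'M['F_2]_(n, l)) (s : bvec l) :
    'M['F_2]_(#|rows_s P s|, l) :=
  rowsub (fun i : 'I_#|rows_s P s| => enum_val i) P.

Definition colspan (n' l : nat) (M : 'M['F_2]_(n', l)) : {set 'cV['F_2]_n'} :=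
  [set M *m v | v : 'cV['F_2]_l].
Definition hweight (n' : nat) (c : 'cV['F_2]_n') : nat :=
  #|[set i : 'I_n' | c i 0 != 0]|.

Definition weight_enum (R : realType) (n' : nat) (C : {set 'cV['F_2]_n'})
    (zeta : R[i]) : R[i] :=
  \sum_(c in C) zeta ^+ hweight c.

Definition expi (R : realType) (phi : R) : R[i] := cos phi +i* sin phi.

Definition alpha (R : realType) (n' l : nat) (M : 'M['F_2]_(n', l)) (phi : R)
    : R[i] :=
  (2 ^+ \rank M)^-1 * expi (phi * n'%:R) *
  weight_enum (colspan M) (expi (- (2 * phi))).

(* Main.v *)
Require Import Defs.
From HB Require Import structures.
From mathcomp Require Import all_boot all_order all_algebra.
From mathcomp Require Import all_classical all_reals all_analysis.
From mathcomp Require Import complex ring mxabelem.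
Import Order.TTheory GRing.Theory Num.Theory.
Import numFieldNormedType.Exports.
Local Open Scope ring_scope.
Local Open Scope complex_scope.
Set Implicit Arguments.
Unset Strict Implicit.

Definition sg {T : pzRingType} (a : 'F_2) : T := (-1) ^+ (a == 1).

Lemma F2_cases (a : 'F_2) : a = 0 \/ a = 1.
Proof. by case: a => [[|[|//]]] Ha; [left|right]; apply: val_inj. Qed.

Lemma sgD {T : pzRingType} (a b : 'F_2) : sg (a + b) = sg a * sg b :> T.
Proof.
by case: (F2_cases a) => ->; case: (F2_cases b) => ->;
  rewrite /sg /= ?expr0 ?expr1 ?mul1r ?mulr1 ?mulrNN ?mulr1.
Qed.

Lemma sgB {T : pzRingType} (a b : 'F_2) : sg (a - b) = sg a * sg b :> T.
Proof.
by case: (F2_cases a) => ->; case: (F2_cases b) => ->;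
  rewrite /sg /= ?expr0 ?expr1 ?mul1r ?mulr1 ?mulrNN ?mulr1.
Qed.

Lemma sg0 {T : pzRingType} : sg 0 = 1 :> T.
Proof. by []. Qed.

Lemma sgE {T : pzRingType} (a : 'F_2) : sg a = 1 - 2 * (a != 0)%:R :> T.
Proof.
by case: (F2_cases a) => ->; rewrite /sg /= ?expr0 ?expr1 ?mulr0 ?subr0 // mulr1 opprD addrA subrr add0r.
Qed.

Lemma sgC (R : realType) (a : 'F_2) : (sg a : R)%:C = sg a.
Proof. by rewrite /sg rmorphXn rmorphN1. Qed.

Lemma vec_addK (l : nat) (x : 'rV['F_2]_l) : x + x = 0.
Proof.
by apply/matrixP => i j; rewrite !mxE; case: (F2_cases (x i j)) => ->; apply/eqP.
Qed.

Lemma dotFDl l (x y s : 'rV['F_2]_l) : dotF (x + y) s = dotF x s + dotF y s.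
Proof. by rewrite /dotF mulmxDl mxE. Qed.
Lemma dotFBl l (x y s : 'rV['F_2]_l) : dotF (x - y) s = dotF x s - dotF y s.
Proof. by have := dotFDl (x - y) y s; rewrite subrK => ->; rewrite addrK. Qed.
Lemma dotFDr l (x s t : 'rV['F_2]_l) : dotF x (s + t) = dotF x s + dotF x t.
Proof. by rewrite /dotF linearD /= mulmxDr mxE. Qed.
Lemma dotFBr l (x s t : 'rV['F_2]_l) : dotF x (s - t) = dotF x s - dotF x t.
Proof. by have := dotFDr x (s - t) t; rewrite subrK => ->; rewrite addrK. Qed.
Lemma dotFC l (x y : 'rV['F_2]_l) : dotF x y = dotF y x.
Proof. by rewrite /dotF -[x *m _]trmxK trmx_mul trmxK mxE. Qed.
Lemma dotF0l l (s : 'rV['F_2]_l) : dotF 0 s = 0.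
Proof. by rewrite /dotF mul0mx mxE. Qed.
Lemma dotF_delta l (x : 'rV['F_2]_l) j : dotF (delta_mx 0 j) x = x 0 j.
Proof.
rewrite /dotF mxE (bigD1 j) //= big1 ?addr0.
  by rewrite !mxE !eqxx mul1r.
by move=> k /negbTE nk; rewrite !mxE nk andbF mul0r.
Qed.

Section An.
Variable R : realType.
Local Open Scope complex_scope.
Local Open Scope classical_set_scope.

Lemma cvgC (u : nat -> R) (A : R) : u @ \oo --> A ->
  ((fun n => (u n)%:C) : nat -> (R[i] : numFieldType)) @ \oo --> (A%:C : (R[i] : numFieldType)).
Proof.
move=> /cvgrPdist_lt H; apply/cvgrPdist_lt => e e0.
move: (e0); rewrite ltcE /= => /andP[/eqP Ie Re0].
have := H _ Re0; apply: filterS => n Hn.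
rewrite -rmorphB normc_def /= expr0n /= addr0 sqrtr_sqr ltcE /= Ie eqxx /=.
exact: Hn.
Qed.

Lemma term_eq (t : R) (k : nat) :
  ('i * t%:C) ^+ k / (k`!)%:R =
  (cos_coeff t k)%:C + 'i * (sin_coeff t k)%:C :> R[i].
Proof.
rewrite /cos_coeff /sin_coeff /=.
rewrite -(odd_double_half k); move: (odd k) (k./2) => b j.
rewrite oddD odd_double half_bit_double addbF.
rewrite exprMn exprD.
have -> : ('i : R[i]) ^+ j.*2 = (-1) ^+ j by rewrite -mul2n exprM sqr_i.
case: b => /=.
- rewrite add1n /= doubleK !mul0r mul1r rmorph0 add0r expr1.
  rewrite !rmorphM fmorphV rmorph_nat rmorphXn rmorphN1 rmorphXn.
  by rewrite !mulrA.
- rewrite add0n /= !mul0r mul1r rmorph0 mulr0 addr0 -exprnP.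
  rewrite !rmorphM fmorphV rmorph_nat rmorphXn rmorphN1 rmorphXn.
  by rewrite mul1r rmorph_nat.
Qed.

Lemma cvg_expi (t : R) :
  (series (fun k => ('i * t%:C) ^+ k / (k`!)%:R) : nat -> (R[i] : numFieldType))
    @ \oo --> (expi t : (R[i] : numFieldType)).
Proof.
have Hc : series (cos_coeff t) @ \oo --> cos t.
  by rewrite cos.unlock; exact: is_cvg_series_cos_coeff.
have Hs : series (sin_coeff t) @ \oo --> sin t.
  by rewrite sin.unlock; exact: is_cvg_series_sin_coeff.
have -> : expi t = (cos t)%:C + 'i * (sin t)%:C.
  by rewrite /expi; apply/eqP; rewrite eq_complex /= !mul0r !mul1r !subr0 !add0r addr0 !eqxx.
rewrite [X in X @ \oo --> _](_ : _ = (fun n => (series (cos_coeff t) n)%:C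
   + 'i * (series (sin_coeff t) n)%:C)); last first.
  apply/funext => n.
  rewrite /series /= rmorph_sum rmorph_sum mulr_sumr -big_split /=.
  by apply: eq_bigr => k _; rewrite term_eq.
apply: cvgD; [exact: cvgC | apply: cvgMl_tmp; exact: cvgC].
Qed.
End An.

Section CharSums.
Variables (T : numDomainType) (l : nat).
Local Notation V := 'rV['F_2]_l.

Lemma char_sum (K : {set V}) (u : V) :
  (forall a b, a \in K -> b \in K -> a + b \in K) ->
  \sum_(k in K) (sg (dotF k u) : T) =
  if [forall k in K, dotF k u == 0] then #|K|%:R else 0.
Proof.
move=> Kadd; case: ifP => [/forallP H | /negbT].
  rewrite (eq_bigr (fun _ => 1)); first by rewrite sumr_const.
  by move=> k Hk; rewrite (eqP (implyP (H k) Hk)).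
rewrite negb_forall => /existsP[k0]; rewrite negb_imply => /andP[Hk0 Hd].
set S := \sum_(k in K) _.
have HS : S = - S.
  rewrite {1}/S (reindex_inj (addIr k0)) /=.
  rewrite (eq_bigl (fun k => k \in K)); last first.
    move=> k; apply/idP/idP => Hk; last exact: Kadd.
    by have := Kadd _ _ Hk Hk0; rewrite -addrA vec_addK addr0.
  rewrite /S -mulN1r mulr_sumr; apply: eq_bigr => k _.
  rewrite dotFDl sgD.
  have -> : dotF k0 u = 1 by case: (F2_cases (dotF k0 u)) Hd => -> //; rewrite eqxx.
  by rewrite [sg 1]/sg eqxx expr1 mulrC.
move/eqP: HS; rewrite -subr_eq0 opprK -mulr2n mulrn_eq0 /= => /eqP ->.
by [].
Qed.

Lemma cardV : #|[set: V]| = (2 ^ l)%N.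
Proof. by rewrite cardsT card_mx card_Fp // mul1n. Qed.

Lemma char_sum_all (x : V) :
  \sum_s (sg (dotF x s) : T) = (x == 0)%:R * (2 ^ l)%:R.
Proof.
under eq_bigr do rewrite dotFC.
have := @char_sum [set: V] x (fun a b _ _ => ltac:(by rewrite inE)).
rewrite (_ : \sum_(k in [set: V]) _ = \sum_k (sg (dotF k x) : T)); last first.
  by apply: eq_bigl => k; rewrite inE.
move=> ->.
have [->|nx] := eqVneq x 0.
  rewrite ifT ?cardV ?mul1r //; apply/forallP => k; apply/implyP => _.
  by rewrite dotFC dotF0l.
rewrite ifF ?mul0r //; apply/negbTE; rewrite negb_forall.
have [j Hj] : exists j, x 0 j != 0.
  apply/existsP; move: nx; apply: contraR; rewrite negb_exists => /forallP H.
  apply/eqP/matrixP => i j; rewrite ord1 mxE; exact/eqP/negbNE/H.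
apply/existsP; exists (delta_mx 0 j); rewrite inE /= dotF_delta.
exact: Hj.
Qed.
End CharSums.

Definition kerset l (M : 'M['F_2]_l) : {set 'rV['F_2]_l} := [set k | k *m M == 0].

Section Proj.
Variables (T : numDomainType) (l : nat) (M : 'M['F_2]_l).
Hypothesis MM : M *m M = M.
Local Notation V := 'rV['F_2]_l.

Lemma kerset_add a b : a \in kerset M -> b \in kerset M -> a + b \in kerset M.
Proof. by rewrite !inE mulmxDl => /eqP-> /eqP->; rewrite addr0. Qed.

Lemma perp (u : V) :
  [forall k in kerset M, dotF k u == 0] = (u \in proj_dual_range M).
Proof.
apply/idP/idP.
  move/forallP => H.
  have Hy : forall y : V, dotF y u = dotF (y *m M) u.
    move=> y; apply/eqP; rewrite -subr_eq0 -dotFBl.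
    apply: (implyP (H _)); rewrite inE mulmxBl -mulmxA MM subrr.
    by [].
  apply/imsetP; exists u => //.
  apply/matrixP => i j; rewrite ord1.
  have := Hy (delta_mx 0 j); rewrite /dotF -!rowE -row_mul.
  rewrite [row j u^T 0 0]mxE [u^T j 0]mxE [row j _ 0 0]mxE => ->.
  by rewrite -(trmxK (u *m M^T)) trmx_mul trmxK [(_^T) 0 j]mxE.
case/imsetP => v _ ->; apply/forallP => k; apply/implyP; rewrite inE => /eqP Hk.
by rewrite /dotF trmx_mul trmxK mulmxA Hk mul0mx mxE.
Qed.

Lemma coset_sum (x u : V) : x \in proj_range M ->
  \sum_(y | y *m M == x) (sg (dotF y u) : T) =
  sg (dotF x u) * (if u \in proj_dual_range M then #|kerset M|%:R else 0).
Proof.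
case/imsetP => x0 _ Hx.
have xM : x *m M = x by rewrite Hx -mulmxA MM.
rewrite (reindex_inj (addIr x)) /=.
rewrite (eq_bigl (fun k => k \in kerset M)); last first.
  by move=> k; rewrite inE mulmxDl xM -[X in _ == X]add0r (inj_eq (addIr x)).
under eq_bigr do rewrite dotFDl sgD.
rewrite -mulr_suml mulrC char_sum ?perp //; exact: kerset_add.
Qed.

Lemma card_KR : (#|kerset M| * #|proj_dual_range M| = 2 ^ l)%N.
Proof.
apply/eqP; rewrite -(eqr_nat T); apply/eqP.
have E1 : \sum_(u : V) \sum_(k in kerset M) (sg (dotF k u) : T) =
    (#|kerset M| * #|proj_dual_range M|)%:R.
  rewrite (eq_bigr (fun u => if u \in proj_dual_range M then #|kerset M|%:R else 0)).
    by rewrite -big_mkcond sumr_const natrM mulr_natr.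
  by move=> u _; rewrite char_sum ?perp //; exact: kerset_add.
rewrite -E1 exchange_big /=.
rewrite (eq_bigr (fun k => (k == 0)%:R * (2 ^ l)%:R)); last by move=> k _; rewrite char_sum_all.
rewrite (bigD1 0) ?inE ?mul0mx //= eqxx mul1r big1 ?addr0 //.
by move=> k /andP[_ /negbTE ->]; rewrite mul0r.
Qed.

End Proj.

Definition lam (R : realType) n l (P : 'M['F_2]_(n, l)) (s : 'rV['F_2]_l) : R :=
  \sum_(a < n) sg (dotF (row a P) s).

Section Amp.
Variables (R : realType) (n l : nat) (P : 'M['F_2]_(n, l)).
Local Open Scope complex_scope.
Local Open Scope classical_set_scope.
Local Notation V := 'rV['F_2]_l.

Lemma lamC (s : V) : (lam R P s)%:C = \sum_(a < n) sg (dotF (row a P) s).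
Proof. by rewrite /lam rmorph_sum; apply: eq_bigr => a _; apply: sgC. Qed.

Lemma Hpow_eq k (x : V) : Hpow R P k x 0 =
  ((2 ^ l)%:R)^-1 * \sum_s sg (dotF x s) * ((lam R P s)%:C) ^+ k.
Proof.
elim: k x => [|k IH] x.
  rewrite /=.
  under eq_bigr do rewrite expr0 mulr1.
  rewrite char_sum_all mulrCA mulVf ?mulr1 //.
rewrite /= (eq_bigr (fun z => \sum_a (x == z + row a P)%:R * Hpow R P k z 0)); last first.
  by move=> z _; rewrite /Hmat mulr_suml.
rewrite exchange_big /=.
rewrite (eq_bigr (fun a => Hpow R P k (x - row a P) 0)); last first.
  move=> a _; rewrite (bigD1 (x - row a P)) //= subrK eqxx mul1r big1 ?addr0 // => z Hz.
  rewrite (_ : (x == z + row a P) = false) ?mul0r //; apply/negbTE.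
  by apply: contra Hz => /eqP ->; rewrite addrK.
under eq_bigr do rewrite IH.
rewrite -mulr_sumr; congr (_ * _).
rewrite exchange_big /=; apply: eq_bigr => s _.
rewrite exprSr; set L := _ ^+ k; rewrite lamC !mulr_sumr; apply: eq_bigr => a _.
rewrite dotFBl sgB; ring.
Qed.

Lemma cvg_fsum (I : finType) (f : I -> nat -> (R[i] : numFieldType)) (L : I -> (R[i] : numFieldType)) :
  (forall i, f i @ \oo --> L i) ->
  (fun m => \sum_i f i m) @ \oo --> \sum_i L i.
Proof.
move=> H; apply: (@cvg_big _ _ +%R 0 xpredT) => //.
exact: add_continuous.
Qed.

Lemma cvg_scale (c1 c2 : (R[i] : numFieldType)) (g : nat -> (R[i] : numFieldType)) b :
  g @ \oo --> b -> (fun m => c1 * c2 * g m) @ \oo --> c1 * (c2 * b).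
Proof. rewrite mulrA; exact: cvgMl_tmp. Qed.

Lemma cvg_expi2 (t u : R) :
  (series (fun k => ('i * (t%:C * u%:C)) ^+ k / (k`!)%:R) : nat -> (R[i] : numFieldType))
    @ \oo --> (expi (t * u) : (R[i] : numFieldType)).
Proof. by rewrite -rmorphM; exact: cvg_expi. Qed.

Lemma amp_eq (theta : R) (x : V) : amp P theta x =
  ((2 ^ l)%:R)^-1 * \sum_s sg (dotF x s) * expi (theta * lam R P s).
Proof.
rewrite /amp; apply: (cvg_lim (@norm_hausdorff (R[i] : numFieldType) (R[i] : numFieldType))).
rewrite (_ : series _ = (fun m => \sum_s (((2 ^ l)%:R)^-1 * sg (dotF x s)) *
    series (fun k => ('i * (theta%:C * (lam R P s)%:C)) ^+ k / (k`!)%:R) m)); last first.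
  apply/funext => m; rewrite /series /=.
  under [RHS]eq_bigr do rewrite mulr_sumr.
  rewrite exchange_big /=; apply: eq_bigr => k _.
  rewrite Hpow_eq !mulr_sumr; apply: eq_bigr => s _.
  rewrite !exprMn; ring.
rewrite mulr_sumr.
eapply cvg_fsum => s.
apply: cvg_scale; exact: cvg_expi2.
Qed.
End Amp.

Lemma card_colspan n' l (A : 'M['F_2]_(n', l)) : #|colspan A| = (2 ^ \rank A)%N.
Proof.
rewrite -(card_imset _ (@trmx_inj _ n' 1)).
rewrite (_ : [set c^T | c in colspan A] = rowg A^T).
  by rewrite card_rowg card_Fp // mxrank_tr.
apply/setP => u; rewrite mem_rowg; apply/imsetP/submxP.
  by case=> c /imsetP[v _ ->] ->; exists v^T; rewrite trmx_mul.
case=> D ->; exists (A *m D^T); last by rewrite trmx_mul trmxK.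
by apply/imsetP; exists D^T.
Qed.

Section Count.
Variables (T : numFieldType) (n' l : nat) (A : 'M['F_2]_(n', l)).
Local Notation V := 'rV['F_2]_l.

Let N : T := \sum_(s : V | A *m s^T == 0) 1.

Lemma fiber_sum (c : 'cV['F_2]_n') : c \in colspan A ->
  \sum_(s : V | A *m s^T == c) (1 : T) = N.
Proof.
case/imsetP => v _ ->.
rewrite /N (reindex_inj (addIr v^T)) /=; apply: eq_bigl => s.
by rewrite linearD /= trmxK mulmxDr -[X in _ == X]add0r (inj_eq (addIr _)).
Qed.

Lemma sum_span (g : 'cV['F_2]_n' -> T) :
  \sum_(s : V) g (A *m s^T) = N * \sum_(c in colspan A) g c.
Proof.
rewrite (partition_big (fun s : V => A *m s^T) (mem (colspan A))) /=; last first.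
  by move=> s _; apply/imsetP; exists s^T.
rewrite mulr_sumr; apply: eq_bigr => c Hc.
rewrite -(fiber_sum Hc) mulr_suml; apply: eq_bigr => s /eqP ->.
by rewrite mul1r.
Qed.

Lemma count_span (g : 'cV['F_2]_n' -> T) :
  \sum_(s : V) g (A *m s^T) = (2 ^ l)%:R / (2 ^ \rank A)%:R * \sum_(c in colspan A) g c.
Proof.
have HN : N * (2 ^ \rank A)%:R = (2 ^ l)%:R.
  have := sum_span (fun=> 1); rewrite sumr_const sumr_const -card_colspan.
  rewrite mulr_natr => <-.
  by rewrite -cardV cardsT.
by rewrite sum_span -HN mulfK // pnatr_eq0 expn_eq0.
Qed.
End Count.

Section Expi.
Variable R : realType.

Lemma expiD (a b : R) : expi a * expi b = expi (a + b).
Proof. rewrite /expi cosD sinD; simpc; congr Complex; ring. Qed.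

Lemma expiN (a : R) : conjc (expi a) = expi (- a).
Proof. by rewrite /expi /= cosN sinN. Qed.

Lemma expiX (a : R) w : expi a ^+ w = expi (a *+ w).
Proof.
elim: w => [|w IH]; first by rewrite expr0 mulr0n /expi cos0 sin0.
by rewrite exprS IH expiD mulrS.
Qed.

Lemma normK (z : R[i]) : `|z| ^+ 2 = z * conjc z.
Proof.
case: z => a b; rewrite -add_Re2_Im2 /=; simpc; congr Complex; ring.
Qed.
End Expi.

Section Alpha.
Variables (R : realType) (n l : nat) (P : 'M['F_2]_(n, l)).
Local Notation V := 'rV['F_2]_l.

Lemma entry_eq (t s : V) (i : 'I_#|rows_s P t|) :
  (Psub P t *m s^T) i 0 = dotF (row (enum_val i) P) s.
Proof. by rewrite /dotF /Psub -row_rowsub -row_mul [row _ _ _ _]mxE. Qed.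

Lemma sum_sgE n' (c : 'cV['F_2]_n') :
  \sum_(i < n') (sg (c i 0) : R) = n'%:R - 2 * (hweight c)%:R.
Proof.
under eq_bigr do rewrite sgE.
rewrite sumrB sumr_const card_ord -mulr_sumr; congr (_ - 2 * _).
rewrite /hweight -sum1_card natr_sum [in RHS]big_mkcond /=; apply: eq_bigr => i _.
by rewrite inE; case: (_ != 0).
Qed.

Lemma lam_diff (s t : V) :
  lam R P s - lam R P (t - s) =
  2 * ((#|rows_s P t|)%:R - 2 * (hweight (Psub P t *m s^T))%:R).
Proof.
rewrite /lam -sumrB.
rewrite (eq_bigr (fun a => if a \in rows_s P t then 2 * sg (dotF (row a P) s) else 0)); last first.
  move=> a _; rewrite dotFBr sgB inE.
  case: (F2_cases (dotF (row a P) t)) => ->.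
    by rewrite sg0 mul1r subrr (_ : ((0 : 'F_2) == 1) = false).
  rewrite eqxx [sg 1]/sg eqxx expr1 mulN1r opprK; ring.
rewrite -big_mkcond /= -mulr_sumr (big_enum_val (fun a => sg (dotF (row a P) s))) /=.
rewrite -sum_sgE; congr (_ * _); apply: eq_bigr => i _; by rewrite entry_eq.
Qed.

Lemma alpha_eq (theta : R) (t : V) :
  \sum_s expi (theta * lam R P s) * conjc (expi (theta * lam R P (t - s))) =
  (2 ^ l)%:R * alpha (Psub P t) (2 * theta).
Proof.
rewrite (eq_bigr (fun s => expi (2 * theta * (#|rows_s P t|)%:R) *
   expi (- (2 * (2 * theta))) ^+ hweight (Psub P t *m s^T))); last first.
  move=> s _; rewrite expiN expiD expiX expiD; congr expi.
  rewrite -mulrBr lam_diff -mulr_natr; ring.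
rewrite -mulr_sumr (count_span _ (fun c => expi (- (2 * (2 * theta))) ^+ hweight c)).
rewrite /alpha /weight_enum [(2 ^ \rank _)%:R]natrX; ring.
Qed.
End Alpha.

Section Main.
Variables (R : realType) (n l : nat) (P : 'M['F_2]_(n, l)) (theta : R).
Local Notation V := 'rV['F_2]_l.
Local Notation E s := (expi (theta * lam R P s)).

Lemma conj_sg (a : 'F_2) : conjc (sg a : R[i]) = sg a.
Proof. by rewrite /sg rmorphXn rmorphN1. Qed.

Lemma probX_eq (y : V) : probX P theta y =
  ((2 ^ l)%:R)^-1 * ((2 ^ l)%:R)^-1 *
  \sum_s \sum_t sg (dotF y (s + t)) * (E s * conjc (E t)).
Proof.
rewrite /probX normK amp_eq rmorphM fmorphV rmorph_nat rmorph_sum.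
rewrite (_ : \sum_s conjc (sg (dotF y s) * E s) = \sum_s sg (dotF y s) * conjc (E s)); last first.
  by apply: eq_bigr => s _; rewrite rmorphM; congr (_ * _); apply: conj_sg.
rewrite mulrACA mulr_suml; congr (_ * _); apply: eq_bigr => s _.
rewrite mulr_sumr; apply: eq_bigr => t _; rewrite dotFDr sgD; ring.
Qed.
End Main.

Theorem proposition5 (R : realType) (n l : nat) (P : 'M['F_2]_(n, l))
    (theta : R) (M : 'M['F_2]_l) :
  M *m M = M ->
  forall x : 'rV['F_2]_l, x \in proj_range M ->
    marginal P theta M x =
    (#|proj_dual_range M|%:R)^-1 *
    \sum_(s in proj_dual_range M)
       (-1) ^+ (dotF x s == 1) * alpha (Psub P s) (2 * theta).
Proof.
move=> MM x Hx.
pose E (s : 'rV['F_2]_l) := expi (theta * lam R P s).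
pose K : R[i] := #|kerset M|%:R.
rewrite /marginal.
rewrite (eq_bigr (fun y => ((2 ^ l)%:R)^-1 * ((2 ^ l)%:R)^-1 *
  \sum_s \sum_t sg (dotF y (s + t)) * (E s * conjc (E t)))); last first.
  by move=> y _; rewrite probX_eq.
rewrite -mulr_sumr exchange_big /=.
rewrite (eq_bigr (fun s => \sum_t (sg (dotF x (s + t)) *
   (if s + t \in proj_dual_range M then K else 0)) * (E s * conjc (E t)))); last first.
  move=> s _; rewrite exchange_big /=; apply: eq_bigr => t _.
  by rewrite -mulr_suml (coset_sum _ MM).
rewrite (eq_bigr (fun s => \sum_u (sg (dotF x u) *
   (if u \in proj_dual_range M then K else 0)) * (E s * conjc (E (u - s))))); last first.
  move=> s _; rewrite (reindex_inj (addIr (-s))) /=; apply: eq_bigr => u _.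
  by rewrite addrCA subrr addr0.
rewrite exchange_big /=.
rewrite (eq_bigr (fun u => (sg (dotF x u) *
   (if u \in proj_dual_range M then K else 0)) *
   ((2 ^ l)%:R * alpha (Psub P u) (2 * theta)))); last first.
  by move=> u _; rewrite -mulr_sumr alpha_eq.
rewrite (eq_bigr (fun u => if u \in proj_dual_range M then
   (K * (2 ^ l)%:R) * (sg (dotF x u) * alpha (Psub P u) (2 * theta)) else 0)); last first.
  by move=> u _; case: ifP => _; [ring | rewrite mulr0 mul0r].
rewrite -big_mkcond /= -mulr_sumr mulrA; congr (_ * _).
have HK := card_KR R[i] MM.
have K0 : K != 0.
  rewrite pnatr_eq0; apply/eqP => H0; move: HK; rewrite H0 mul0n => /esym/eqP.
  by rewrite expn_eq0.
have R0 : (#|proj_dual_range M|%:R : R[i]) != 0.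
  rewrite pnatr_eq0; apply/eqP => H0; move: HK; rewrite H0 muln0 => /esym/eqP.
  by rewrite expn_eq0.
rewrite -HK natrM -/K; field.
by rewrite K0 R0.
Qed.
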